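(* Let $S$ be a finite Rhodes semisimple semigroup and let $\Omega$ be a finite semisimple partial $S$-set. Then the action of $S$ on $\Omega$ is faithful if and only if, for each $\mathsf{RM}$-irreducible $\mathscr J$-class $J$ of $S$: (1) $\Omega_J\neq\emptyset$; and (2) $\Omega_Je_J$ is a faithful $M_J$-set.
   Context: All semigroups are finite and act on the right. $\mathscr J$-classes are ordered by $J'\le J$ iff $S^1J'S^1\subseteq S^1JS^1$; a $\mathscr J$-class is regular if it contains an idempotent. For each regular $\mathscr J$-class $J$ fix an idempotent $e_J\in J$ and let $G_J$ be its maximal subgroup. For a regular $\mathscr J$-class $J$: $s\equiv_J t$ iff for all $x,y\in J$, $xsy\in J\iff xty\in J$, and if both lie in $J$ then $xsy=xty$; $s\equiv_{\mathsf{RM},J}t$ iff for all $x\in J$, $xs\in J\iff xt\in J$, and if both lie in $J$ then $xs=xt$. $S$ is Rhodes semisimple if $\bigcap_J\equiv_J$ (over regular $J$) is the equality relation. A regular $J$ is $\mathsf{RM}$-irreducible if $\bigcap_{J'<J}\equiv_{\mathsf{RM},J'}\not\subseteq\equiv_{\mathsf{RM},J}$ (over regular $J'<J$; empty intersection is universal). For such $J$, $M_J=\{g\in G_J\mid g\equiv_{\mathsf{RM},J'}e_J\ \forall\text{ regular }J'<J\}$. A partial $S$-set is a finite set $\Omega$ with a right action of $S$ by partial maps (equalities of possibly undefined expressions mean both undefined or both defined and equal); it is faithful if distinct elements act as distinct partial maps. The strong orbit of $\alpha$ is $\{\beta\in\Omega\mid \alpha S^1=\beta S^1\}$; it is null if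 $\mathscr O S\cap\mathscr O=\emptyset$ and transitive otherwise. $\Omega$ is semisimple if every strong orbit is transitive and $S$-invariant (if $\alpha\in\mathscr O$ and $\alpha s$ is defined then $\alpha s\in\mathscr O$). Each such strong orbit $\mathscr O$ is a partial $S$-set in its own right, and there is a unique minimal $\mathscr J$-class $J$ with $\mathscr O s\neq\emptyset$ for some $s\in J$; it is regular and called the apex of $\mathscr O$. $\Omega_J$ denotes the union of the strong orbits with apex $J$, and $\Omega_Je_J=\{\alpha e_J\mid\alpha\in\Omega_J,\ \alpha e_J \text{ defined}\}$, on which $G_J$ acts by permutations. *)

(* Defs.v *)
From mathcomp Require Import all_boot.
Set Implicit Arguments. Unset Strict Implicit. Unset Printing Implicit Defensive.

Record fsemigroup := FSemigroup {
  fs_sort :> finType;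
  fs_mul : fs_sort -> fs_sort -> fs_sort;
  fs_assoc : associative fs_mul }.

Section SemigroupDefs.
Context (S : fsemigroup).
Local Notation m := (@fs_mul S).

Definition ideal1 (s : S) : {set S} :=
  [set u | [|| u == s, [exists x, u == m x s], [exists x, u == m s x]
           | [exists x, exists y, u == m (m x s) y]]].
Definition rideal1 (s : S) : {set S} := [set u | (u == s) || [exists x, u == m s x]].
Definition lideal1 (s : S) : {set S} := [set u | (u == s) || [exists x, u == m x s]].

Definition jclass (s : S) : {set S} := [set t | ideal1 t == ideal1 s].
Definition is_jclass (J : {set S}) : bool := [exists s, J == jclass s].
Definition jle (J' J : {set S}) : bool :=
  [forall a in J', forall b in J, ideal1 a \subset ideal1 b].
Definition jlt (J' J : {set S}) : bool := jle J' J && (J' != J).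
Definition regular (J : {set S}) : bool := is_jclass J && [exists x in J, m x x == x].

(* maximal subgroup at an idempotent e: its H-class *)
Definition maxsubgroup (e : S) : {set S} :=
  [set g | (rideal1 g == rideal1 e) && (lideal1 g == lideal1 e)].

Definition equivJ (J : {set S}) (s t : S) : bool :=
  [forall x in J, forall y in J,
     ((m (m x s) y \in J) == (m (m x t) y \in J)) &&
     ((m (m x s) y \in J) ==> (m (m x s) y == m (m x t) y))].

Definition equivRM (J : {set S}) (s t : S) : bool :=
  [forall x in J, ((m x s \in J) == (m x t \in J)) &&
                  ((m x s \in J) ==> (m x s == m x t))].

Definition rhodes_semisimple : Prop :=
  forall s t : S, (forall J, regular J -> equivJ J s t) -> s = t.

Definition RM_irreducible (J : {set S}) : bool :=
  regular J &&
  [exists s, exists t,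
     [forall J' : {set S}, (regular J' && jlt J' J) ==> equivRM J' s t]
     && ~~ equivRM J s t].

Definition MJ (J : {set S}) (eJ : S) : {set S} :=
  [set g in maxsubgroup eJ |
     [forall J' : {set S}, (regular J' && jlt J' J) ==> equivRM J' g eJ]].

Section PartialAct.
Context (Omega : finType) (act : Omega -> S -> option Omega).

Definition is_partial_act : Prop :=
  forall a s t, act a (m s t) = obind (fun b => act b t) (act a s).

Definition faithful_act : Prop :=
  forall s t : S, (forall a, act a s = act a t) -> s = t.

Definition reachset (a : Omega) : {set Omega} :=
  [set b | (b == a) || [exists s, act a s == Some b]].
Definition sorbit (a : Omega) : {set Omega} :=
  [set b | reachset b == reachset a].

Definition orbit_transitive (O : {set Omega}) : bool :=
  [exists a in O, exists s, exists b in O, act a s == Some b].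
Definition orbit_invariant (O : {set Omega}) : bool :=
  [forall a in O, forall s, forall b, (act a s == Some b) ==> (b \in O)].
Definition semisimple_act : Prop :=
  forall a, orbit_transitive (sorbit a) && orbit_invariant (sorbit a).

Definition acts_nontrivially (O : {set Omega}) (J : {set S}) : bool :=
  [exists s in J, exists a in O, act a s != None].
Definition apex (O : {set Omega}) (J : {set S}) : bool :=
  [&& is_jclass J, acts_nontrivially O J &
   [forall J' : {set S}, [&& is_jclass J', acts_nontrivially O J' & jle J' J]
                         ==> (J' == J)]].

Definition OmegaJ (J : {set S}) : {set Omega} := [set a | apex (sorbit a) J].
Definition OmegaJ_e (J : {set S}) (eJ : S) : {set Omega} :=
  [set b | [exists a in OmegaJ J, act a eJ == Some b]].

Definition faithful_on (A : {set S}) (X : {set Omega}) : Prop :=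
  forall g h, g \in A -> h \in A -> (forall b, b \in X -> act b g = act b h) -> g = h.

End PartialAct.
End SemigroupDefs.

(* Main.v *)
Require Import Defs.
From mathcomp Require Import all_boot zify.
Set Implicit Arguments. Unset Strict Implicit. Unset Printing Implicit Defensive.

Section Pow.
Variable S : fsemigroup.
Local Notation m := (@fs_mul S).

Definition pw (k : S) (n : nat) : S := iter n (fun x => m x k) k.
Lemma pwS k n : pw k n.+1 = m (pw k n) k. Proof. by []. Qed.
Lemma pwD k a b : m (pw k a) (pw k b) = pw k (a + b).+1.
Proof.
elim: b => [|b IH]; first by rewrite addn0.
by rewrite [pw k b.+1]pwS fs_assoc IH addnS.
Qed.
Lemma pw_comm k n : m k (pw k n) = pw k n.+1.
Proof. by rewrite -[k]/(pw k 0) pwD. Qed.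

Lemma per_pw k : exists i P, 0 < P /\ pw k (i + P) = pw k i.
Proof.
pose f (i : 'I_#|S|.+1) := pw k i.
have ninj : ~ injective f.
  by move=> inj; move: (leq_card f inj); rewrite card_ord ltnn.
have [i [j [Hij Hf]]] : exists i j, i != j /\ f i = f j.
  case: (boolP [exists i, exists j, (i != j) && (f i == f j)]).
    by case/existsP=> i /existsP [j /andP [H1 /eqP H2]]; exists i, j.
  move=> H; exfalso; apply: ninj => i j Hij; apply/eqP; apply/negPn/negP => Hn.
  move/negP: H; apply; apply/existsP; exists i; apply/existsP; exists j.
  by rewrite Hn Hij eqxx.
rewrite /f in Hf.
case: (ltngtP i j) => H.
- by exists i, (j - i); rewrite subn_gt0 H subnKC ?(ltnW H).
- by exists j, (i - j); rewrite subn_gt0 H subnKC ?(ltnW H).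
- by move: Hij; rewrite (val_inj H) eqxx.
Qed.

Lemma pw_shift k i P : pw k (i + P) = pw k i -> forall c, pw k (i + c + P) = pw k (i + c).
Proof.
move=> HP [|c]; first by rewrite addn0.
rewrite -addnA (addnC c.+1) addnA !addnS -!pwD HP //.
Qed.

Lemma pw_period k i P : pw k (i + P) = pw k i -> forall c d, pw k (i + c + d * P) = pw k (i + c).
Proof.
move=> HP c; elim => [|d IH]; first by rewrite mul0n addn0.
by rewrite mulSn (addnC P) addnA -(addnA i c) pw_shift // addnA.
Qed.

Lemma idem_pw k : exists n, m (pw k n) (pw k n) = pw k n.
Proof.
have [i [P [HP Hper]]] := per_pw k.
exists (P * i.+1).-1.
have Hn : i <= (P * i.+1).-1.
  rewrite -ltnS prednK ?muln_gt0 ?HP //.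
  by rewrite -{1}[i.+1]mul1n leq_mul2r HP orbT.
set n := (P * i.+1).-1 in Hn *.
have E : (n + n).+1 = i + (n - i) + i.+1 * P.
  have : n.+1 = P * i.+1 by rewrite /n prednK // muln_gt0 HP.
  lia.
by rewrite pwD E pw_period // subnKC.
Qed.

Lemma pump_iter p v x : x = m (m p x) v -> forall n, x = m (m (pw p n) x) (pw v n).
Proof.
move=> Hx; elim=> [|n IH] //.
rewrite {1}Hx {1}IH -pw_comm pwS.
by rewrite !fs_assoc.
Qed.

Lemma pump p v x : x = m (m p x) v -> x = m x v \/ exists w, x = m (m x v) w.
Proof.
move=> Hx; have [i [P [HP Hper]]] := per_pw v.
have Hi := pump_iter Hx i.
have E : x = m x (pw v P.-1).
  rewrite {1}Hi -Hper -(prednK HP) addnS -pwD.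
  by rewrite !fs_assoc -Hi.
case: P.-1 E => [|q] E; [by left | right].
by exists (pw v q); rewrite -fs_assoc pw_comm.
Qed.
End Pow.

Definition opS (S : fsemigroup) : fsemigroup.
Proof.
refine (@FSemigroup (fs_sort S) (fun a b => fs_mul b a) _).
by move=> x y z; rewrite fs_assoc.
Defined.

Lemma pump_op (S : fsemigroup) (p v x : S) : x = fs_mul (fs_mul p x) v ->
  x = fs_mul p x \/ exists w, x = fs_mul w (fs_mul p x).
Proof.
move=> Hx; have := @pump (opS S) v p x; cbn.
rewrite fs_assoc => H; apply: H; exact: Hx.
Qed.

Section Dev.
Variable S : fsemigroup.
Local Notation m := (@fs_mul S).

Definition mul1 (a b : option S) : option S :=
  match a, b with
  | Some a, Some b => Some (m a b)
  | None, _ => b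
  | _, None => a
  end.
Local Infix "**" := mul1 (at level 40, left associativity).

Lemma mul1A : associative mul1.
Proof. by case=> [a|] [b|] [c|] //=; rewrite fs_assoc. Qed.
Lemma mul1None o : o ** None = o. Proof. by case: o. Qed.
Lemma Nonemul1 o : None ** o = o. Proof. by []. Qed.
Lemma mul1SS a b : Some a ** Some b = Some (m a b). Proof. by []. Qed.
Lemma mul1_Sl a o : exists z, Some a ** o = Some z.
Proof. by case: o => [b|]; eexists. Qed.
Lemma mul1_Sr a o : exists z, o ** Some a = Some z.
Proof. by case: o => [b|]; eexists. Qed.

Definition leJ (u s : S) := exists a b, Some u = a ** Some s ** b.
Definition leR (u s : S) := exists b, Some u = Some s ** b.
Definition leL (u s : S) := exists a, Some u = a ** Some s.

Lemma ideal1P u s : u \in ideal1 s <-> leJ u s.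
Proof.
rewrite inE; split.
  case/or4P.
  - by move/eqP->; exists None, None.
  - by case/existsP=> x /eqP->; exists (Some x), None.
  - by case/existsP=> x /eqP->; exists None, (Some x).
  - by case/existsP=> x /existsP [y /eqP->]; exists (Some x), (Some y).
case=> [[a|] [[b|] ]] /= [->].
- by apply/or4P; apply: Or44; apply/existsP; exists a; apply/existsP; exists b.
- by apply/or4P; apply: Or42; apply/existsP; exists a.
- by apply/or4P; apply: Or43; apply/existsP; exists b.
- by apply/or4P; apply: Or41.
Qed.

Lemma rideal1P u s : u \in rideal1 s <-> leR u s.
Proof.
rewrite inE; split.
  case/orP; first by move/eqP->; exists None.
  by case/existsP=> x /eqP->; exists (Some x).
case=> [[b|]] /= [] ->; apply/orP; [right; apply/existsP; exists b|left]; done.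
Qed.

Lemma lideal1P u s : u \in lideal1 s <-> leL u s.
Proof.
rewrite inE; split.
  case/orP; first by move/eqP->; exists None.
  by case/existsP=> x /eqP->; exists (Some x).
case=> [[b|]] /= [] ->; apply/orP; [right; apply/existsP; exists b|left]; done.
Qed.

Lemma leJ_refl u : leJ u u. Proof. by exists None, None. Qed.
Lemma leJ_trans u v w : leJ u v -> leJ v w -> leJ u w.
Proof.
move=> [a [b Hu]] [c [d Hv]]; rewrite /leJ Hu Hv.
by exists (a ** c), (d ** b); rewrite !mul1A.
Qed.
Lemma leR_refl u : leR u u. Proof. by exists None. Qed.
Lemma leR_trans u v w : leR u v -> leR v w -> leR u w.
Proof. move=> [b Hu] [d Hv]; rewrite /leR Hu Hv; exists (d ** b); by rewrite !mul1A. Qed.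
Lemma leL_refl u : leL u u. Proof. by exists None. Qed.
Lemma leL_trans u v w : leL u v -> leL v w -> leL u w.
Proof. move=> [b Hu] [d Hv]; rewrite /leL Hu Hv; exists (b ** d); by rewrite !mul1A. Qed.
Lemma leR_J u v : leR u v -> leJ u v.
Proof. by move=> [b H]; exists None, b. Qed.
Lemma leL_J u v : leL u v -> leJ u v.
Proof. by move=> [b H]; exists b, None; rewrite mul1None. Qed.
Lemma leJ_gen a s b u : Some u = a ** Some s ** b -> leJ u s.
Proof. by move=> H; exists a, b. Qed.

Lemma sub_ideal1 u s : (ideal1 u \subset ideal1 s) <-> leJ u s.
Proof.
split.
  by move/subsetP/(_ u) => H; apply/ideal1P; apply: H; apply/ideal1P; apply: leJ_refl.
by move=> H; apply/subsetP=> w /ideal1P Hw; apply/ideal1P; exact: leJ_trans Hw H.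
Qed.

Lemma eq_ideal1 u s : ideal1 u = ideal1 s <-> leJ u s /\ leJ s u.
Proof.
split; first by move=> E; split; apply/sub_ideal1; rewrite E subxx.
by case=> /sub_ideal1 H1 /sub_ideal1 H2; apply/eqP; rewrite eqEsubset H1 H2.
Qed.

Lemma in_jclass t s : t \in jclass s <-> leJ t s /\ leJ s t.
Proof. by rewrite inE; split => [/eqP/eq_ideal1|/eq_ideal1 ->]. Qed.

Lemma eq_rideal1 u s : leR u s -> leR s u -> rideal1 u = rideal1 s.
Proof.
move=> H1 H2; apply/eqP; rewrite eqEsubset; apply/andP; split; apply/subsetP=> w
 /rideal1P H; apply/rideal1P; apply: leR_trans H _; done.
Qed.
Lemma eq_lideal1 u s : leL u s -> leL s u -> lideal1 u = lideal1 s.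
Proof.
move=> H1 H2; apply/eqP; rewrite eqEsubset; apply/andP; split; apply/subsetP=> w
 /lideal1P H; apply/lideal1P; apply: leL_trans H _; done.
Qed.

Lemma is_jclassP (J : {set S}) : is_jclass J -> exists s0, J = jclass s0.
Proof. by case/existsP=> s0 /eqP->; exists s0. Qed.

Lemma jc_mem (J : {set S}) (a : S) : is_jclass J -> a \in J ->
  forall t, t \in J <-> (leJ t a /\ leJ a t).
Proof.
move=> /is_jclassP [s0 ->] /in_jclass [h1 h2] t; split.
  by case/in_jclass=> h3 h4; split; [exact: leJ_trans h3 h2| exact: leJ_trans h1 h4].
by case=> h3 h4; apply/in_jclass; split; [exact: leJ_trans h3 h1| exact: leJ_trans h2 h4].
Qed.

Lemma jc_le (J : {set S}) (a b : S) : is_jclass J -> a \in J -> b \in J -> leJ a b.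
Proof. by move=> HJ Ha /(jc_mem HJ Ha) []. Qed.

Lemma sandwich (J : {set S}) (z w w' : S) : is_jclass J -> z \in J -> w' \in J ->
  leJ w z -> leJ w' w -> w \in J.
Proof.
move=> HJ Hz Hw' H1 H2; apply/(jc_mem HJ Hz); split; first exact: H1.
exact: leJ_trans (jc_le HJ Hz Hw') H2.
Qed.


Lemma stabR (x y : S) b : Some y = Some x ** b -> leJ x y -> leR x y.
Proof.
move=> Hy [p [q Hx]]; case: b Hy => [b|] /= [Ey]; last first.
  by exists None; rewrite Ey.
rewrite Ey in Hx; case: p q Hx => [p|] [q|] /= [Hx].
- have : x = m (m p x) (m b q) by rewrite {1}Hx !fs_assoc.
  case/pump => [E|[w E]].
    by exists (Some q); rewrite /= Ey {1}E !fs_assoc.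
  by exists (Some (m q w)); rewrite /= Ey {1}E !fs_assoc.
- have : x = m (m p x) b by rewrite {1}Hx !fs_assoc.
  case/pump => [E|[w E]].
    by exists None; rewrite /= Ey {1}E.
  by exists (Some w); rewrite /= Ey {1}E.
- by exists (Some q); rewrite /= Ey {1}Hx.
- by exists None; rewrite /= Ey {1}Hx.
Qed.

Lemma stabL (x y : S) a : Some y = a ** Some x -> leJ x y -> leL x y.
Proof.
move=> Hy [p [q Hx]]; case: a Hy => [a|] /= [Ey]; last first.
  by exists None; rewrite Ey.
rewrite Ey in Hx; case: p q Hx => [p|] [q|] /= [Hx].
- have : x = m (m (m p a) x) q by rewrite {1}Hx !fs_assoc.
  case/pump_op => [E|[w E]].
    by exists (Some p); rewrite /= Ey {1}E !fs_assoc.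
  by exists (Some (m w p)); rewrite /= Ey {1}E !fs_assoc.
- by exists (Some p); rewrite /= Ey {1}Hx.
- move: Hx.
  case/pump_op => [E|[w E]].
    by exists None; rewrite /= Ey {1}E.
  by exists (Some w); rewrite /= Ey {1}E.
- by exists None; rewrite /= Ey {1}Hx.
Qed.


Lemma RM_refl (J : {set S}) s : equivRM J s s.
Proof. by apply/forall_inP=> x _; rewrite !eqxx implybT. Qed.

Lemma RM_sym (J : {set S}) s t : equivRM J s t -> equivRM J t s.
Proof.
move/forall_inP=> H; apply/forall_inP=> x Hx.
case/andP: (H x Hx) => /eqP E1 /implyP E2.
rewrite E1 eqxx /=; apply/implyP=> H1; rewrite -E1 in H1.
by rewrite (eqP (E2 H1)).
Qed.

Lemma RM_trans (J : {set S}) s t u : equivRM J s t -> equivRM J t u -> equivRM J s u.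
Proof.
move/forall_inP=> H /forall_inP H'; apply/forall_inP=> x Hx.
case/andP: (H x Hx) => /eqP E1 /implyP E2.
case/andP: (H' x Hx) => /eqP E3 /implyP E4.
rewrite E1 E3 eqxx /=; apply/implyP=> H1.
have Hs : m x s \in J by rewrite E1 E3.
have Ht : m x t \in J by rewrite E3.
by rewrite (eqP (E2 Hs)) (eqP (E4 Ht)).
Qed.

Lemma RM_key (J : {set S}) c d z u v w1 w2 : is_jclass J -> z \in J -> equivRM J u v ->
  Some w1 = c ** Some u ** d -> Some w2 = c ** Some v ** d ->
  m z w1 \in J -> m z w2 \in J /\ m z w1 = m z w2.
Proof.
move=> HJ Hz HRM H1 H2 Hzw.
have [z' Hz'] := mul1_Sl z c.
have E1 : Some (m z w1) = Some (m z' u) ** d.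
  by rewrite -[Some (m z' u)]mul1SS -Hz' -mul1SS H1 !mul1A.
have E2 : Some (m z w2) = Some (m z' v) ** d.
  by rewrite -[Some (m z' v)]mul1SS -Hz' -mul1SS H2 !mul1A.
have Hz'J : z' \in J.
  apply: (sandwich HJ Hz Hzw); first by exists None, c.
  by exists None, (Some u ** d); rewrite Nonemul1 mul1A mul1SS -E1.
have Hzu : m z' u \in J.
  apply: (sandwich HJ Hz'J Hzw); first by exists None, (Some u).
  by exists None, d.
move/forall_inP: HRM => /(_ z' Hz'J) /andP [/eqP EJ /implyP Eq].
have Ev := eqP (Eq Hzu).
have E : m z w1 = m z w2 by apply: Some_inj; rewrite E1 E2 Ev.
by rewrite -E.
Qed.

Lemma RM_cong (J : {set S}) c d u v w1 w2 : is_jclass J -> equivRM J u v ->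
  Some w1 = c ** Some u ** d -> Some w2 = c ** Some v ** d -> equivRM J w1 w2.
Proof.
move=> HJ HRM H1 H2; apply/forall_inP=> z Hz.
case A: (m z w1 \in J).
  by have [-> ->] := RM_key HJ Hz HRM H1 H2 A; rewrite !eqxx.
case B: (m z w2 \in J) => //.
by have [] := RM_key HJ Hz (RM_sym HRM) H2 H1 B; rewrite A.
Qed.

Lemma RM_J (J : {set S}) s t : is_jclass J -> equivRM J s t -> equivJ J s t.
Proof.
move=> HJ HRM; apply/forall_inP=> x Hx; apply/forall_inP=> y Hy.
have H := RM_cong (c := None) (d := Some y) HJ HRM erefl erefl.
move/forall_inP: H => /(_ x Hx); by rewrite !fs_assoc.
Qed.

Section Act.
Variables (Omega : finType) (act : Omega -> S -> option Omega).
Hypothesis hact : is_partial_act act.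
Hypothesis hsemi : semisimple_act act.

Definition acto (a : Omega) (o : option S) : option Omega :=
  match o with Some s => act a s | None => Some a end.

Lemma acto_mul a o1 o2 : acto a (o1 ** o2) = obind (fun b => acto b o2) (acto a o1).
Proof.
case: o1 o2 => [s|] [t|] //=; try exact: hact; by case: (act a s).

Qed.

Lemma act_mul a s t : act a (m s t) = obind (fun b => act b t) (act a s).
Proof. exact: hact. Qed.

Lemma reachP a b : b \in reachset act a <-> exists o, acto a o = Some b.
Proof.
rewrite inE; split.
  case/orP; first by move/eqP->; exists None.
  by case/existsP=> s /eqP H; exists (Some s).
case=> [[s|]] /= H; apply/orP; [right; apply/existsP; exists s; rewrite H | left; case: H => ->].
  done. done.
Qed.

Lemma orb_self a : a \in sorbit act a.
Proof. by rewrite inE. Qed.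

Lemma orb_reach a c d : c \in sorbit act a -> d \in sorbit act a ->
  exists o, acto c o = Some d.
Proof.
rewrite !inE => /eqP Hc /eqP Hd; apply/reachP; rewrite Hc -Hd.
by rewrite inE eqxx.
Qed.

Lemma orb_inv a c s d : c \in sorbit act a -> act c s = Some d -> d \in sorbit act a.
Proof.
move=> Hc Hd; have /andP [_ /forallP H] := hsemi a.
move: (H c); rewrite Hc /= => /forallP /(_ s) /forallP /(_ d) /implyP; apply.
by rewrite Hd.
Qed.

Lemma orb_invo a c o d : c \in sorbit act a -> acto c o = Some d -> d \in sorbit act a.
Proof.
case: o => [s|] /=; first exact: orb_inv.
by move=> Hc [<-].
Qed.


Lemma jleP (J' J : {set S}) : jle J' J <-> (forall a b, a \in J' -> b \in J -> leJ a b).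
Proof.
split.
  move=> /forall_inP H a b Ha Hb; move/forall_inP: (H a Ha) => /(_ b Hb).
  by move/sub_ideal1.
move=> H; apply/forall_inP=> a Ha; apply/forall_inP=> b Hb; apply/sub_ideal1; exact: H.
Qed.

Lemma nontrivP (O : {set Omega}) (J : {set S}) :
  acts_nontrivially act O J <-> exists t b, [/\ t \in J, b \in O & act b t != None].
Proof.
split.
  by case/exists_inP=> t Ht /exists_inP [b Hb H]; exists t, b.
by case=> t [b [Ht Hb H]]; apply/exists_inP; exists t => //; apply/exists_inP; exists b.
Qed.

Lemma apexP O J : apex act O J ->
  [/\ is_jclass J, acts_nontrivially act O J &
      forall J', is_jclass J' -> acts_nontrivially act O J' -> jle J' J -> J' = J].
Proof.
case/and3P=> H1 H2 /forallP H3; split=> // J' Ha Hb Hc.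
by apply/eqP; move/implyP: (H3 J'); apply; rewrite Ha Hb Hc.
Qed.

Lemma jclass_is (z : S) : is_jclass (jclass z).
Proof. by apply/existsP; exists z. Qed.

Lemma jclass_self (z : S) : z \in jclass z.
Proof. by rewrite inE. Qed.

Lemma apex_below a0 J g s : apex act (sorbit act a0) J -> g \in sorbit act a0 ->
  act g s != None -> forall j, j \in J -> leJ j s.
Proof.
move=> Hap Hg Hgs; case/apexP: Hap => HJ /nontrivP [t [b [Ht Hb Hbt]]] Hmin.
case Ebt: (act b t) Hbt => [b'|] // _.
have Hb' := orb_inv Hb Ebt.
have [o Ho] := orb_reach Hb' Hg.
case Egs: (act g s) Hgs => [g'|] // _.
have [z Hz] := mul1_Sr s (Some t ** o).
have Hbz : act b z = Some g'.
  by rewrite -[act b z]/(acto b (Some z)) -Hz !acto_mul /= Ebt /= Ho /= Egs.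
have Ezt : leJ z t by exists None, (o ** Some s); rewrite -Hz !mul1A.
have Ezs : leJ z s by exists (Some t ** o), None; rewrite mul1None -Hz.
have E : jclass z = J.
  apply: Hmin; first exact: jclass_is.
    by apply/nontrivP; exists z, b; split => //; [exact: jclass_self | rewrite Hbz].
  apply/jleP=> a1 b1 Ha1 Hb1.
  have [h1 _] := (in_jclass a1 z).1 Ha1.
  exact: leJ_trans h1 (leJ_trans Ezt (jc_le HJ Ht Hb1)).
have Hz' : z \in J by rewrite -E jclass_self.
by move=> j Hj; exact: leJ_trans (jc_le HJ Hj Hz') Ezs.
Qed.


Lemma apex_triv a0 J g w z : apex act (sorbit act a0) J -> g \in sorbit act a0 ->
  z \in J -> leJ w z -> w \notin J -> act g w = None.
Proof.
move=> Hap Hg Hz Hwz Hw; case E: (act g w) => [d|] //.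
have HJ : is_jclass J by case/apexP: Hap.
have Hne : act g w != None by rewrite E.
have H := apex_below Hap Hg Hne Hz.
by exfalso; move/negP: Hw; apply; apply/(jc_mem HJ Hz); split.
Qed.

Lemma apex_exists a0 J z : apex act (sorbit act a0) J -> z \in J ->
  exists2 g, g \in sorbit act a0 & act g z != None.
Proof.
move=> Hap Hz; case/apexP: (Hap) => HJ /nontrivP [t [b [Ht Hb Hbt]]] _.
have [p [q Hpq]] := jc_le HJ Ht Hz.
move: Hbt; rewrite -[act b t]/(acto b (Some t)) Hpq !acto_mul.
case Ep: (acto b p) => [g|] //= H.
exists g; first exact: orb_invo Hb Ep.
by move: H; case: (act g z).
Qed.

Lemma apex_RM a0 J s t g : apex act (sorbit act a0) J -> equivRM J s t ->
  g \in sorbit act a0 -> act g s = act g t.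
Proof.
move=> Hap HRM Hg; case/apexP: (Hap) => HJ /nontrivP [t0 [b [Ht0 Hb Hbt]]] _.
case Ebt: (act b t0) Hbt => [b'|] // _.
have Hb' := orb_inv Hb Ebt.
have [o Ho] := orb_reach Hb' Hg.
have [z Hz] := mul1_Sl t0 o.
have Hbz : act b z = Some g.
  by rewrite -[act b z]/(acto b (Some z)) -Hz !acto_mul /= Ebt /= Ho.
have Hzt : leJ z t0 by exists None, o.
have Hzn : act b z != None by rewrite Hbz.
have Hz' : z \in J.
  by apply/(jc_mem HJ Ht0); split => //; apply: apex_below Hap Hb Hzn _ Ht0.
have E : forall u, act g u = act b (m z u) by move=> u; rewrite act_mul Hbz.
move/forall_inP: HRM => /(_ z Hz') /andP [/eqP E1 /implyP E2].
case Hzs: (m z s \in J).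
  by rewrite !E (eqP (E2 Hzs)).
rewrite !E !(apex_triv Hap Hb Hz') //.
- by exists None, (Some t).
- by rewrite -E1 Hzs.
- by exists None, (Some s).
- by rewrite Hzs.
Qed.


Lemma jclass_eq (a b : S) : ideal1 a = ideal1 b -> jclass a = jclass b.
Proof. by move=> E; apply/setP=> u; rewrite !inE E. Qed.

Lemma act_pw c k n : act c k = Some c -> act c (pw k n) = Some c.
Proof.
move=> H; elim: n => [|n IH] //.
by rewrite pwS act_mul IH /= H.
Qed.

Lemma le_pw k n : leJ (pw k n) k.
Proof.
case: n => [|n]; first exact: leJ_refl.
by exists (Some (pw k n)), None.
Qed.

Lemma apex_reg a : exists J, apex act (sorbit act a) J /\ regular J.
Proof.
set O := sorbit act a.
have /andP [/exists_inP [c Hc /existsP [s0 /exists_inP [d Hd /eqP Hcd]]] _] := hsemi a.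
pose P (s : S) := [exists c in O, act c s != None].
have P0 : P s0 by apply/exists_inP; exists c => //; rewrite Hcd.
case: (arg_minnP (fun s => #|ideal1 s|) P0) => s1 Ps1 Hmin.
have Hap : apex act O (jclass s1).
  apply/and3P; split; first exact: jclass_is.
    case/exists_inP: Ps1 => c1 Hc1 H1.
    by apply/nontrivP; exists s1, c1; split => //; exact: jclass_self.
  apply/forallP=> J'; apply/implyP=> /and3P [/is_jclassP [s' ->] /nontrivP [t [b [Ht Hb Hbt]]] Hle].
  have Pt : P t by apply/exists_inP; exists b.
  have Hts : leJ t s1 by apply: (jleP _ _).1 Hle _ _ Ht (jclass_self s1).
  have E : ideal1 t = ideal1 s1.
    apply/eqP; rewrite eqEcard (Hmin t Pt) andbT; exact/sub_ideal1.
  have [E1 E2] := (in_jclass t s').1 Ht.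
  have E' : ideal1 s' = ideal1 t by apply/eq_ideal1.
  by rewrite (jclass_eq E') (jclass_eq E).
exists (jclass s1); split => //.
apply/andP; split; first exact: jclass_is.
case/exists_inP: Ps1 => c1 Hc1.
case E1: (act c1 s1) => [d1|] // _.
have Hd1 := orb_inv Hc1 E1.
have [o Ho] := orb_reach Hd1 Hc1.
have [k Hk] := mul1_Sl s1 o.
have Hck : act c1 k = Some c1.
  by rewrite -[act c1 k]/(acto c1 (Some k)) -Hk !acto_mul /= E1 /= Ho.
have [n Hn] := idem_pw k.
apply/exists_inP; exists (pw k n); last by rewrite Hn.
have Hne : act c1 (pw k n) != None by rewrite act_pw.
have Hks : leJ k s1 by exists None, o.
apply/in_jclass; split; first exact: leJ_trans (le_pw k n) Hks.
exact: apex_below Hap Hc1 Hne _ (jclass_self s1).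
Qed.

Lemma sepL c d u v w1 w2 al : Some w1 = c ** Some u ** d -> Some w2 = c ** Some v ** d ->
  act al w1 != act al w2 -> exists g, act g u != act g v.
Proof.
move=> H1 H2.
rewrite -[act al w1]/(acto al (Some w1)) -[act al w2]/(acto al (Some w2)) H1 H2 !acto_mul.
case: (acto al c) => [g|] //= H; exists g.
by apply/negP=> /eqP E; move: H; rewrite /= E eqxx.
Qed.

Lemma core1 a0 J z1 z2 : apex act (sorbit act a0) J -> z1 \in J -> leJ z2 z1 ->
  z2 \notin J -> exists g, act g z1 != act g z2.
Proof.
move=> Hap Hz1 Hle Hz2.
have [g Hg Hne] := apex_exists Hap Hz1.
exists g; by rewrite (apex_triv Hap Hg Hz1 Hle Hz2).
Qed.

Lemma core2 J e x y u v : is_jclass J -> e \in J -> m e e = e -> x \in J -> y \in J ->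
  m (m x u) y \in J -> m (m x v) y \in J -> m (m x u) y != m (m x v) y ->
  (forall J', regular J' -> jlt J' J -> equivRM J' u v) ->
  faithful_on act (MJ J e) (OmegaJ_e act J e) -> exists g, act g u != act g v.
Proof.
move=> HJ He Hee Hx Hy Hw1 Hw2 Hne Hlow Hfaith.
set w1 := m (m x u) y in Hw1 Hne; set w2 := m (m x v) y in Hw2 Hne.
have [p [q Hpq]] := jc_le HJ He Hw1.
have [a Ha] := mul1_Sl e p.
have [b Hb] := mul1_Sr e q.
have Heab : Some e = Some a ** Some w1 ** Some b.
  have X : Some e ** (p ** Some w1 ** q) ** Some e = Some a ** Some w1 ** Some b.
    by rewrite -Ha -Hb !mul1A.
  by rewrite -Hpq /= !Hee in X.
have [c Hc] : leR x w1.
  by apply: (stabR (b := Some (m u y))); [rewrite /= fs_assoc | exact: jc_le HJ Hx Hw1].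
have [c2 Hc2] : leR x w2.
  by apply: (stabR (b := Some (m v y))); [rewrite /= fs_assoc | exact: jc_le HJ Hx Hw2].
have [c' Hc'] : leL y w1.
  by apply: (stabL (a := Some (m x u))); [done | exact: jc_le HJ Hy Hw1].
have [c2' Hc2'] : leL y w2.
  by apply: (stabL (a := Some (m x v))); [done | exact: jc_le HJ Hy Hw2].
set r := m a w1; set r' := m a w2.
have [z Hz] : leL w1 r.
  apply: (stabL (a := Some a)); first done.
  apply: leJ_trans (jc_le HJ Hw1 He) _.
  by exists None, (Some b).
have Ek : Some w2 = Some w1 ** (c ** Some v ** Some y) by rewrite !mul1A -Hc.
have Ek2 : Some w1 = Some w2 ** (c2 ** Some u ** Some y) by rewrite !mul1A -Hc2.
have El : Some w2 = (Some x ** Some v ** c') ** Some w1 by rewrite -!mul1A -Hc' !mul1A.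
have El2 : Some w1 = (Some x ** Some u ** c2') ** Some w2 by rewrite -!mul1A -Hc2' !mul1A.
have Ezr' : Some w2 = z ** Some r'.
  have -> : Some r' = Some a ** (Some w1 ** (c ** Some v ** Some y)) by rewrite -Ek.
  by rewrite (mul1A (Some a)) (mul1A z) -[Some a ** Some w1]/(Some r) -Hz -Ek.
have Hea : Some e ** Some a = Some a by rewrite -Ha mul1A mul1SS Hee.
have Her : m e r = r.
  apply: Some_inj; rewrite -[Some (m e r)]/(Some e ** (Some a ** Some w1)) mul1A Hea.
  done.
have Hrb : Some e = Some r ** Some b by exact: Heab.
have Hr'r : Some r' = Some a ** Some x ** Some v ** c' ** z ** Some r.
  by rewrite -[Some r']/(Some a ** Some w2) El Hz !mul1A.
have Hrr' : Some r = Some a ** Some x ** Some u ** c2' ** z ** Some r'.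
  by rewrite -[Some r]/(Some a ** Some w1) El2 Ezr' !mul1A.
set g := m r' b.
have Hgr : Some g ** Some r = Some r'.
  rewrite -[Some g]/(Some r' ** Some b) {1}Hr'r -(mul1A (Some a ** Some x ** Some v ** c' ** z)) -Hrb -(mul1A _ (Some e) (Some r)) (mul1SS e r) Her.
  by rewrite Hr'r.
have Hrk : Some r = Some r' ** (c2 ** Some u ** Some y).
  by rewrite -[Some r]/(Some a ** Some w1) Ek2 mul1A.
have Hg1 : Some e = Some g ** (Some r ** (c2 ** Some u ** Some y) ** Some b).
  by rewrite Hrb {1}Hrk -Hgr !mul1A.
have Hg2 : Some g = Some e ** (p ** Some w2 ** Some b).
  by rewrite -[Some g]/(Some a ** Some w2 ** Some b) -Ha !mul1A.
have Hg3 : Some g = (Some r' ** q) ** Some e by rewrite -mul1A Hb.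
have Hg4 : Some e = Some a ** Some x ** Some u ** c2' ** z ** Some g.
  by rewrite Hrb Hrr' -mul1A.
have Hgne : g != e.
  apply/eqP=> Ege; move/eqP: Hne; apply.
  have E1 : Some r' = Some r by rewrite -Hgr Ege mul1SS Her.
  by apply: Some_inj; rewrite Hz Ezr' E1.
have Hge : Some g = (Some a ** Some x) ** Some v ** (Some y ** Some b).
  by rewrite -[Some g]/(Some a ** Some w2 ** Some b) -[Some w2]/(Some x ** Some v ** Some y) !mul1A.
have Hee' : Some e = (Some a ** Some x) ** Some u ** (Some y ** Some b).
  by rewrite Heab -[Some w1]/(Some x ** Some u ** Some y) !mul1A.
have HgM : g \in MJ J e.
  rewrite inE; apply/andP; split.
    rewrite inE; apply/andP; split; apply/eqP.
      by apply: eq_rideal1; [exists (p ** Some w2 ** Some b) | exists (Some r ** (c2 ** Some u ** Some y) ** Some b)].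
    by apply: eq_lideal1; [exists (Some r' ** q) | exists (Some a ** Some x ** Some u ** c2' ** z)].
  apply/forallP=> J'; apply/implyP=> /andP [HJ'r HJ'lt].
  have HJ'j : is_jclass J' by case/andP: HJ'r.
  apply: RM_sym; exact: (RM_cong HJ'j (Hlow J' HJ'r HJ'lt) Hee' Hge).
have HeM : e \in MJ J e.
  rewrite inE; apply/andP; split; first by rewrite inE !eqxx.
  by apply/forallP=> J'; apply/implyP=> _; exact: RM_refl.
have [be Hbe Hnebe] : exists2 be, be \in OmegaJ_e act J e & act be g != act be e.
  apply/exists_inP; rewrite -negb_forall_in; apply/negP => /forall_inP H.
  by move/eqP: Hgne; apply; apply: Hfaith => // b' Hb'; apply/eqP; apply: H.
move: Hbe; rewrite inE => /exists_inP [al Hal /eqP Hale].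
have Heg : m e g = g.
  apply: Some_inj; rewrite -(mul1SS e g) Hg2.
  by rewrite (mul1A (Some e) (Some e)) (mul1SS e e) Hee.
have Hag : act al g = act be g by rewrite -{1}Heg act_mul Hale.
have Hae : act al e = act be e.
  have := act_mul al e e; rewrite Hee Hale /=; done.
have Hne' : act al g != act al e by rewrite Hag Hae.
have [d Hd] := sepL Hge Hee' Hne'.
by exists d; rewrite eq_sym.
Qed.

Lemma not_jle_triv a0 JO J w x0 : apex act (sorbit act a0) JO -> ~~ jle JO J ->
  is_jclass J -> x0 \in J -> leJ w x0 -> act a0 w = None.
Proof.
move=> Hap Hle HJ Hx0 Hw; case E: (act a0 w) => [d|] //.
have Hne : act a0 w != None by rewrite E.
have H := apex_below Hap (orb_self a0) Hne.
exfalso; move/negP: Hle; apply; apply/jleP=> a b Ha Hb.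
exact: leJ_trans (H a Ha) (leJ_trans Hw (jc_le HJ Hx0 Hb)).
Qed.

End Act.

Lemma maxsub_props (g e : S) : g \in maxsubgroup e -> m e e = e ->
  [/\ m e g = g, leJ g e & leJ e g].
Proof.
rewrite inE => /andP [/eqP Hr _] Hee.
have : g \in rideal1 e by rewrite -Hr; apply/rideal1P; exact: leR_refl.
move/rideal1P=> [o Ho].
have : e \in rideal1 g by rewrite Hr; apply/rideal1P; exact: leR_refl.
move/rideal1P=> [o' Ho'].
split; [|by exists None, o|by exists None, o'].
apply: Some_inj; rewrite -mul1SS Ho mul1A mul1SS Hee //.
Qed.

Lemma bigcup_jclass (s1 : S) : \bigcup_(a in jclass s1) ideal1 a = ideal1 s1.
Proof.
apply/setP=> u; apply/bigcupP/idP.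
  by case=> a; rewrite inE => /eqP ->.
by move=> H; exists s1 => //; exact: jclass_self.
Qed.

Definition fJ (J : {set S}) := #|\bigcup_(a in J) ideal1 a|.

Lemma fJ_lt (J' J : {set S}) : is_jclass J' -> is_jclass J -> jlt J' J -> fJ J' < fJ J.
Proof.
move=> /is_jclassP [s1 ->] /is_jclassP [s2 ->] /andP [Hle Hne].
rewrite /fJ !bigcup_jclass; apply: proper_card; rewrite properEneq.
have Hs : leJ s1 s2 by apply: (jleP _ _).1 Hle _ _ (jclass_self s1) (jclass_self s2).
have Hsub : ideal1 s1 \subset ideal1 s2 by apply/sub_ideal1.
rewrite Hsub andbT.
by apply: contra Hne => /eqP E; rewrite (jclass_eq E).
Qed.

Lemma rhodes_sep (u v : S) : rhodes_semisimple S -> u != v ->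
  exists2 J, regular J & ~~ equivJ J u v.
Proof.
move=> hS Hne; case: (boolP [forall J, regular J ==> equivJ J u v]) => H.
  exfalso; move/eqP: Hne; apply; apply: hS => J HJ.
  by move/forallP/(_ J)/implyP: H; apply.
by move: H; rewrite negb_forall => /existsP [J]; rewrite negb_imply => /andP [H1 H2]; exists J.
Qed.

Section Main.
Variables (Omega : finType) (act : Omega -> S -> option Omega).
Hypothesis hact : is_partial_act act.
Hypothesis hsemi : semisimple_act act.

Lemma dir1 (e : {set S} -> S)
  (he : forall J : {set S}, regular J -> e J \in J /\ m (e J) (e J) = e J) :
  faithful_act act ->
  (forall J : {set S}, RM_irreducible J ->
     OmegaJ act J != set0 /\ faithful_on act (MJ J (e J)) (OmegaJ_e act J (e J))).
Proof.
move=> Hf J /andP [HJreg /existsP [s /existsP [t /andP [/forallP Hlow Hnot]]]].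
have HJ : is_jclass J by case/andP: HJreg.
have [He Hee] := he J HJreg.
split.
  apply/negP => /eqP H0.
  move: Hnot; rewrite /equivRM negb_forall_in => /exists_inP [x0 Hx0 Hbad].
  have Huv : m x0 s != m x0 t.
    by apply: contra Hbad => /eqP ->; rewrite !eqxx implybT.
  have [al Hal] : exists al, act al (m x0 s) != act al (m x0 t).
    apply/existsP; rewrite -negb_forall; apply/negP=> /forallP H.
    by move/eqP: Huv; apply; apply: Hf => al; move/eqP: (H al).
  have [JO [HapO HregO]] := apex_reg hact hsemi al.
  case: (eqVneq JO J) => [EJ | NJ].
    have : al \in OmegaJ act J by rewrite inE -EJ.
    by rewrite H0 inE.
  case Hle: (jle JO J).
    have HRM : equivRM JO s t by move/implyP: (Hlow JO); apply; rewrite HregO /jlt Hle NJ.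
    have HJO : is_jclass JO by case/andP: HregO.
    have HRM' := RM_cong (c := Some x0) (d := None) HJO HRM erefl erefl.
    by move/eqP: Hal; apply; apply: (apex_RM hact hsemi HapO HRM' (orb_self act al)).
  have Hn := negbT Hle.
  rewrite (not_jle_triv hact hsemi HapO Hn HJ Hx0) in Hal; last by exists None, (Some s).
  rewrite (not_jle_triv hact hsemi HapO Hn HJ Hx0) in Hal; last by exists None, (Some t).
  by rewrite eqxx in Hal.
move=> g h Hg Hh Hgh; apply: Hf => al.
have [JO [HapO HregO]] := apex_reg hact hsemi al.
move: Hg Hh; rewrite !inE => /andP [Hgm /forallP HgRM] /andP [Hhm /forallP HhRM].
have Hgm' : g \in maxsubgroup (e J) by rewrite inE.
have Hhm' : h \in maxsubgroup (e J) by rewrite inE.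
have [Heg Hge1 Hge2] := maxsub_props Hgm' Hee.
have [Heh Hhe1 Hhe2] := maxsub_props Hhm' Hee.
case: (eqVneq JO J) => [EJ | NJ].
  rewrite -Heg -Heh !act_mul; case E: (act al (e J)) => [b|] //=.
  apply: Hgh; rewrite inE; apply/exists_inP; exists al; last by rewrite E.
  by rewrite inE -EJ.
case Hle: (jle JO J).
  have HJO : is_jclass JO by case/andP: HregO.
  have Hc : regular JO && jlt JO J by rewrite HregO /jlt Hle NJ.
  have H1 : equivRM JO g (e J) by move/implyP: (HgRM JO); apply.
  have H2 : equivRM JO h (e J) by move/implyP: (HhRM JO); apply.
  exact: (apex_RM hact hsemi HapO (RM_trans H1 (RM_sym H2)) (orb_self act al)).
have Hn := negbT Hle.
by rewrite (not_jle_triv hact hsemi HapO Hn HJ He Hge1) (not_jle_triv hact hsemi HapO Hn HJ He Hhe1).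
Qed.

Lemma dir2 (e : {set S} -> S)
  (he : forall J : {set S}, regular J -> e J \in J /\ m (e J) (e J) = e J)
  (hS : rhodes_semisimple S) :
  (forall J : {set S}, RM_irreducible J ->
     OmegaJ act J != set0 /\ faithful_on act (MJ J (e J)) (OmegaJ_e act J (e J))) ->
  faithful_act act.
Proof.
move=> Hcond s t Hst; apply/eqP; apply/negPn/negP => Hne.
suff [d Hd] : exists d, act d s != act d t by move: Hd; rewrite Hst eqxx.
have [J0 HJ0 HnJ0] := rhodes_sep hS Hne.
pose P (J : {set S}) := regular J && ~~ equivRM J s t.
have P0 : P J0.
  rewrite /P HJ0 /=; apply: contra HnJ0; apply: RM_J; by case/andP: HJ0.
case: (arg_minnP fJ P0) => J /andP [HJreg Hnot] Hmin.
have HJ : is_jclass J by case/andP: HJreg.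
have Hlow : forall J', regular J' -> jlt J' J -> equivRM J' s t.
  move=> J' HJ'r Hlt; apply/negPn/negP => Hn.
  have := Hmin J'; rewrite /P HJ'r Hn => /(_ isT).
  have := fJ_lt (proj1 (andP HJ'r)) HJ Hlt.
  by rewrite ltnNge => /negP.
have Hirr : RM_irreducible J.
  apply/andP; split => //; apply/existsP; exists s; apply/existsP; exists t.
  rewrite Hnot andbT; apply/forallP=> J'; apply/implyP=> /andP [H1 H2]; exact: Hlow.
have [HOm HF] := Hcond J Hirr.
have [He Hee] := he J HJreg.
case/set0Pn: HOm => a0; rewrite inE => Hap0.
move: Hnot; rewrite /equivRM negb_forall_in => /exists_inP [x0 Hx0 Hbad].
suff [d Hd] : exists d, act d (m x0 s) != act d (m x0 t).
  by apply: (sepL hact (c := Some x0) (d := None) erefl erefl Hd).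
case A: (m x0 s \in J) Hbad; case B: (m x0 t \in J) => //= Hbad.
-
  set u := m x0 s in A Hbad *; set v := m x0 t in B Hbad *.
  have [J'' HJ''r HnJ''] := rhodes_sep hS Hbad.
  have HJ''j : is_jclass J'' by case/andP: HJ''r.
  have HlowUV : forall J', regular J' -> jlt J' J -> equivRM J' u v.
    move=> J' H1 H2; have HJ' : is_jclass J' by case/andP: H1.
    exact: (RM_cong (c := Some x0) (d := None) HJ' (Hlow J' H1 H2) erefl erefl).
  have HJJ : J'' = J.
    move: (HnJ''); rewrite /equivJ negb_forall_in => /exists_inP [x Hx].
    rewrite negb_forall_in => /exists_inP [y Hy Hb2].
    have Hw : exists2 w, w \in J'' & leJ w u \/ leJ w v.
      case A2 : (m (m x u) y \in J'').
        by exists (m (m x u) y) => //; left; exists (Some x), (Some y).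
      case B2 : (m (m x v) y \in J'') Hb2; last by rewrite A2.
      by move=> _; exists (m (m x v) y) => //; right; exists (Some x), (Some y).
    have Hle : jle J'' J.
      case: Hw => w Hw Hwuv; apply/jleP=> a b Ha Hb.
      apply: leJ_trans (jc_le HJ''j Ha Hw) _.
      case: Hwuv => H; apply: leJ_trans H _; exact: jc_le HJ _ Hb.
    apply/eqP; apply/negPn/negP => Hneq.
    have Hlt : jlt J'' J by rewrite /jlt Hle Hneq.
    by move/negP: HnJ''; apply; apply: RM_J => //; exact: HlowUV.
  rewrite HJJ in HnJ''.
  move: HnJ''; rewrite /equivJ negb_forall_in => /exists_inP [x Hx].
  rewrite negb_forall_in => /exists_inP [y Hy Hb2].
  have Hsep : forall u' v', (forall J', regular J' -> jlt J' J -> equivRM J' u' v') ->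
      m (m x u') y \in J -> m (m x v') y \notin J -> exists d, act d u' != act d v'.
    move=> u' v' _ H1 H2.
    have Hle : leJ (m (m x v') y) (m (m x u') y).
      apply: leJ_trans (jc_le HJ Hx H1); exists None, (Some (m v' y)).
      by rewrite /= fs_assoc.
    have [g Hg] := core1 hact hsemi Hap0 H1 Hle H2.
    exact: (sepL hact (c := Some x) (d := Some y) erefl erefl Hg).
  case A2 : (m (m x u) y \in J) Hb2; case B2 : (m (m x v) y \in J) => //= Hb2.
  + exact: (core2 hact HJ He Hee Hx Hy A2 B2 Hb2 HlowUV HF).
  + by apply: Hsep => //; rewrite B2.
  + have [d Hd] : exists d, act d v != act d u.
      apply: Hsep => //; last by rewrite A2.
      by move=> J' H1 H2; apply: RM_sym; apply: HlowUV.
    by exists d; rewrite eq_sym.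
- have Hle : leJ (m x0 t) (m x0 s).
    by apply: leJ_trans (jc_le HJ Hx0 A); exists None, (Some t).
  have [g Hg] := core1 hact hsemi Hap0 A Hle (negbT B); by exists g.
- have Hle : leJ (m x0 s) (m x0 t).
    by apply: leJ_trans (jc_le HJ Hx0 B); exists None, (Some s).
  have [g Hg] := core1 hact hsemi Hap0 B Hle (negbT A); by exists g; rewrite eq_sym.
Qed.

End Main.
End Dev.

Theorem theorem2p4 (S : fsemigroup) (e : {set S} -> S)
  (he : forall J : {set S}, regular J -> e J \in J /\ fs_mul (e J) (e J) = e J)
  (Omega : finType) (act : Omega -> S -> option Omega)
  (hact : is_partial_act act)
  (hS : rhodes_semisimple S) (hOmega : semisimple_act act) :
  faithful_act act <->
  (forall J : {set S}, RM_irreducible J ->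
     OmegaJ act J != set0 /\ faithful_on act (MJ J (e J)) (OmegaJ_e act J (e J))).
Proof.
split.
  exact: (dir1 hact hOmega he).
exact: (dir2 hact hOmega he hS).
Qed.
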